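(* Let $G=(V,E,\omega)$ be a weighted directed graph, let $\lambda_0$ be an eigenvalue of $M_G$, and let $S$ be a $\lambda_0$-structural set of $G$. Let $u^S=(u^S_i)_{i\in S}$ be an eigenvector of the reduced matrix $R_S(G,\lambda_0)$ with eigenvalue $\lambda_0$. Then the recursive relations $$u_i=u^S_i\ \ (i\in S_0=S),\qquad u_\ell=\sum_{j\in S_{k-1}}\frac{\omega(\ell,j)}{\lambda_0-\omega(\ell,\ell)}\,u_j\ \ \text{for all }\ell\in S_k\setminus S_{k-1},\ k\ge 1,$$ uniquely determine a vector $u=(u_i)_{i\in V}$, and $u$ is an eigenvector of $M_G$ associated to $\lambda_0$ whose restriction to $S$ is $u^S$.
   Context: Let $G=(V,E,\omega)$ be a weighted directed graph with vertex set $V=\{1,\dots,n\}$, edge set $E\subset V\times V$ and weight function $\omega:E\to\mathbb{C}$; set $\omega(i,j)=0$ whenever $(i,j)\notin E$. Its weighted adjacency matrix is $M_G=(\omega(i,j))_{i,j\in V}$ (acting on column vectors, so $(M_Gu)_i=\sum_j\omega(i,j)u_j$). A path is a sequence $(i_0,\dots,i_p)$ with $p\ge 1$ and $(i_\ell,i_{\ell+1})\in E$ for $0\le \ell\le p-1$, whose vertices are pairwise distinct except that possibly $i_0=i_p$; if $i_0=i_p$ the path is a cycle, and a cycle with $p=1$ is a loop. For $S\subset V$ write $\overline S=V\setminus S$. Given $\lambda\in\mathbb{C}$, a nonempty set $S\subset V$ is a $\lambda$-structural set of $G$ if (i) every cycle of $G$ that is not a loop contains a vertex of $S$, and (ii)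 $\omega(i,i)\neq\lambda$ for every $i\in\overline S$. A branch of $(G,S)$ is a path $\beta=(i_0,i_1,\dots,i_p)$ whose interior vertices $i_1,\dots,i_{p-1}$ all lie in $\overline S$; $\mathscr B_{ij}$ denotes the set of branches with $i_0=i$ and $i_p=j$. The weight of a branch is $\omega(\beta,\lambda)=\omega(i_0,i_1)\prod_{\ell=1}^{p-1}\frac{\omega(i_\ell,i_{\ell+1})}{\lambda-\omega(i_\ell,i_\ell)}$. For $i,j\in S$ set $R_{ij}(G,S,\lambda)=\sum_{\beta\in\mathscr B_{ij}}\omega(\beta,\lambda)$; the reduced matrix $R_S(G,\lambda)$ is the $S\times S$ matrix with entries $R_{ij}(G,S,\lambda)$, $i,j\in S$. Depth of a vertex (relative to $S$), defined recursively: every $i\in S$ has depth $0$; a vertex $i\in\overline S$ has depth $k\ge1$ iff it has no depth less than $k$ and every $j\neq i$ with $(i,j)\in E$ has depth $<k$. Since $S$ is structural, every vertex has a finite depth. $S_k$ denotes the set of vertices of depth $\le k$. *)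

(* Defs.v *)
From HB Require Import structures.
From mathcomp Require Import all_boot all_order all_algebra.
Set Implicit Arguments. Unset Strict Implicit. Unset Printing Implicit Defensive.
Import Order.TTheory GRing.Theory Num.Theory.
Local Open Scope ring_scope.

(* Vertex set V = 'I_n, edge set E : rel 'I_n, weights w : 'I_n -> 'I_n -> C
   (with w i j = 0 when (i,j) is not an edge, imposed as a hypothesis). *)

Section GraphDefs.
Variables (C : numClosedFieldType) (n : nat).
Implicit Types (E : rel 'I_n) (w : 'I_n -> 'I_n -> C) (S : {set 'I_n}).

Definition adjmx w : 'M[C]_n := \matrix_(i, j) w i j.

(* A path (i0, i1, ..., ip) is represented by its first vertex i0 and the
   sequence s = [:: i1; ...; ip].  p >= 1, consecutive pairs are edges, and
   the vertices are pairwise distinct except possibly i0 = ip. *)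
Definition is_gpath E (i0 : 'I_n) (s : seq 'I_n) : bool :=
  [&& (1 <= size s)%N, path E i0 s &
      uniq (i0 :: s) || ((last i0 s == i0) && uniq s)].

Definition is_gcycle E i0 s : bool := is_gpath E i0 s && (last i0 s == i0).

Definition is_gloop E i0 s : bool := is_gcycle E i0 s && (size s == 1%N).

Definition structural E w S (lam : C) : Prop :=
  [/\ S != set0,
      (forall i0 s, is_gcycle E i0 s -> ~~ is_gloop E i0 s ->
         has (fun v => v \in S) (i0 :: s))
    & (forall i, i \notin S -> w i i != lam)].

Definition is_branch E S i0 s : bool :=
  is_gpath E i0 s && all (fun v => v \notin S) (take (size s).-1 s).

Fixpoint tail_weight w (lam : C) (a : 'I_n) (s : seq 'I_n) : C :=
  match s with
  | [::] => 1
  | b :: s' => w a b / (lam - w a a) * tail_weight w lam b s'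
  end.

(* omega(beta, lam) = w(i0,i1) * prod_{l=1}^{p-1} w(i_l,i_{l+1})/(lam - w(i_l,i_l)) *)
Definition branch_weight w (lam : C) (i0 : 'I_n) (s : seq 'I_n) : C :=
  match s with
  | [::] => 1
  | i1 :: s' => w i0 i1 * tail_weight w lam i1 s'
  end.

(* R_ij(G,S,lam): sum over all branches from i to j.  A branch has at most n
   vertices after i0, so it is enumerated exactly once as a k-tuple, k <= n. *)
Definition Rij E w S (lam : C) (i j : 'I_n) : C :=
  \sum_(k < n.+1) \sum_(t : k.-tuple 'I_n | is_branch E S i t && (last i t == j))
     branch_weight w lam i t.

Definition redmx E w S (lam : C) : 'M[C]_#|S| :=
  \matrix_(a, b) Rij E w S lam (enum_val a) (enum_val b).

Fixpoint Sk E S (k : nat) : {set 'I_n} :=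
  match k with
  | 0 => S
  | k'.+1 => Sk E S k' :|:
             [set i | [forall j, ((j != i) && E i j) ==> (j \in Sk E S k')]]
  end.

End GraphDefs.

(* Main.v *)
Require Import Defs.
From HB Require Import structures.
From mathcomp Require Import all_boot all_order all_algebra.
Import Order.TTheory GRing.Theory Num.Theory.
Local Open Scope ring_scope.

Lemma size_uniq_ord n (s : seq 'I_n) : uniq s -> (size s <= n)%N.
Proof.
move=> us; rewrite -[X in (_ <= X)%N]size_enum_ord; apply: uniq_leq_size => //.
by move=> x _; rewrite mem_enum.
Qed.

Lemma take_belast (T : Type) (j : T) t : take (size t) (j :: t) = belast j t.
Proof. by elim: t j => [|b t IH] j //=; rewrite IH. Qed.

Definition tsum {C : nzRingType} {T : finType} k (P : seq T -> bool) (F : seq T -> C) :=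
  \sum_(t : k.-tuple T | P t) F t.

Lemma tsum_cons (C : nzRingType) (T : finType) k P F :
  tsum k.+1 P F = \sum_(j : T) tsum k (fun t => P (j :: t)) (fun t => F (j :: t)) :> C.
Proof.
rewrite /tsum pair_big_dep /=.
rewrite (reindex (fun p : T * k.-tuple T => [tuple of p.1 :: p.2])) /=; last first.
  exists (fun t : k.+1.-tuple T => (thead t, [tuple of behead t])).
    by case=> x t _ /=; congr pair; apply: val_inj.
  by move=> t _; rewrite [RHS]tuple_eta; apply: val_inj.
by [].
Qed.

Lemma tsum0 (C : nzRingType) (T : finType) P F :
  @tsum C T 0 P F = (if P [::] then F [::] else 0).
Proof.
rewrite /tsum (eq_bigl (fun t : 0.-tuple T => P [::] && (t == [tuple])));
  last by case=> -[|x s] //= sz; rewrite [_ == _](_ : _ = true) ?andbT //; apply/eqP/val_inj.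
case: (P [::]); last by rewrite big_pred0.
by rewrite big_pred1_eq.
Qed.

Lemma tsum_condl (C : nzRingType) (T : finType) k (c : bool) (P : seq T -> bool) F :
  @tsum C T k (fun t => c && P t) F = (if c then tsum k P F else 0).
Proof. by case: c; rewrite // /tsum big_pred0. Qed.

Lemma tsum_nil (C : nzRingType) (T : finType) N (c : bool) F :
  (0 < N)%N ->
  \sum_(k < N) tsum k (fun t : seq T => c && (t == [::])) F = (if c then F [::] else 0) :> C.
Proof.
case: N => // N _.
rewrite big_ord_recl tsum0 eqxx andbT big1 ?addr0 //.
move=> i _; rewrite /tsum big_pred0 //; case=> -[|x s] sz //=.
by rewrite andbF.
Qed.

Lemma tsum_eq (C : nzRingType) (T : finType) k (P1 P2 : seq T -> bool) (F1 F2 : seq T -> C) :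
  (forall t : seq T, size t = k -> P1 t = P2 t) ->
  (forall t : seq T, size t = k -> P1 t -> F1 t = F2 t) ->
  tsum k P1 F1 = tsum k P2 F2 :> C.
Proof.
move=> HP HF; rewrite /tsum; apply: eq_big => t; first by rewrite HP // size_tuple.
by move=> Pt; rewrite HF // size_tuple.
Qed.

Lemma tsum_scale (C : nzRingType) (T : finType) k (P : seq T -> bool) (F : seq T -> C) c :
  tsum k P (fun t => c * F t) = c * tsum k P F.
Proof. by rewrite /tsum mulr_sumr. Qed.

Lemma tsum_pred0 (C : nzRingType) (T : finType) k (P : seq T -> bool) (F : seq T -> C) :
  (forall t, size t = k -> P t = false) -> tsum k P F = 0.
Proof. by move=> H; rewrite /tsum big_pred0 // => t; rewrite H // size_tuple. Qed.

Set Implicit Arguments. Unset Strict Implicit.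



Lemma cycle_of_fun n (A : pred 'I_n) (f : 'I_n -> 'I_n) (E : rel 'I_n) v :
  (forall y, A y -> A (f y)) -> (forall y, A y -> f y != y) ->
  (forall y, A y -> E y (f y)) -> A v ->
  exists c s, [/\ is_gcycle E c s, ~~ is_gloop E c s & all A (c :: s)].
Proof.
move=> Af fne Ef Av.
have Ait k : A (iter k f v) by elim: k => //= k IH; apply: Af.
have Hl : looping f v n.
  rewrite -[looping _ _ _]negbK -looping_uniq; apply/negP => /size_uniq_ord.
  by rewrite size_traject ltnn.
case: (ex_minnP (ex_intro (fun m => looping f v m) n Hl)) => m lm minm.
case: m lm minm => [|m'] lm minm; first by rewrite /looping /= in lm.
have um : uniq (traject f v m'.+1).
  rewrite looping_uniq; apply/negP => /minm; by rewrite ltnn.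
move: lm; rewrite /looping => /trajectP [i lti eqi].
set m := m'.+1 in um eqi lti.
set c := iter i f v.
have Hd : m = (i + (m - i))%N by rewrite subnKC // ltnW.
move: um; rewrite Hd trajectD cat_uniq => /and3P [_ _ uc].
case Hdd : (m - i)%N => [|d']; first by move: lti; rewrite -subn_gt0 Hdd.
rewrite Hdd in uc Hd.
have Ec : iter d' f (f c) = c.
  by rewrite -iterSr -iterD addnC -Hd eqi.
exists c, (traject f (f c) d'.+1).
have Aall : all A (c :: traject f (f c) d'.+1).
  apply/allP => y; rewrite in_cons => /orP [/eqP -> | /trajectP [j _ ->]]; first exact: Ait.
  by rewrite /c -iterSr -iterD; apply: Ait.
have Hlast : last c (traject f (f c) d'.+1) = c by rewrite last_traject iterSr.
split=> //.
- rewrite /is_gcycle /is_gpath size_traject Hlast eqxx andbT /=.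
  apply/andP; split.
    apply: (sub_in_path (P := A) _ Aall (fpath_traject f c d'.+1)).
    by move=> x y Ax _ /eqP <-; apply: Ef.
  have ut : uniq (traject f (f c) d'.+1).
    by rewrite trajectSr rcons_uniq Ec; move: uc; rewrite -/c trajectS.
  by apply/orP; right.
- rewrite /is_gloop /= eqSS; apply/nandP; right.
  case: d' Ec {Hdd Hd uc Aall Hlast} => [|d'] //= Ec.
  by move: (fne c (Ait i)); rewrite Ec eqxx.
Qed.

Lemma Sk_sub n (E : rel 'I_n) (S : {set 'I_n}) k : Sk E S k \subset Sk E S k.+1.
Proof. exact: subsetUl. Qed.

Lemma Sk_mono n (E : rel 'I_n) (S : {set 'I_n}) k m : (k <= m)%N -> Sk E S k \subset Sk E S m.
Proof.
elim: m => [|m IH]; first by rewrite leqn0 => /eqP ->.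
rewrite leq_eqVlt => /orP [/eqP -> //| ]; rewrite ltnS => /IH H.
exact: subset_trans H (Sk_sub _ _ _).
Qed.

Lemma S_Sk n (E : rel 'I_n) (S : {set 'I_n}) k : S \subset Sk E S k.
Proof. exact: (Sk_mono E S (leq0n k)). Qed.

Lemma SkS_step n (E : rel 'I_n) (S : {set 'I_n}) k x j :
  x \in Sk E S k.+1 -> x \notin Sk E S k -> E x j -> j != x -> j \in Sk E S k.
Proof.
rewrite /= in_setU => /orP [-> //| ]; rewrite inE => /forallP H _ Exj jx.
by move: (H j); rewrite jx Exj.
Qed.

Lemma sk_closed n (E : rel 'I_n) (S : {set 'I_n}) k y z :
  y \in Sk E S k -> y \notin S -> E y z -> z != y -> z \in Sk E S k.
Proof.
elim: k => [|k IH] /=; first by move=> -> .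
case Hy: (y \in Sk E S k).
  by move=> _ yS Eyz zy; rewrite in_setU (IH Hy yS Eyz zy).
move=> H _ Eyz zy; rewrite in_setU (SkS_step H _ Eyz zy) //. by rewrite Hy.
Qed.

Lemma Sk_stable n (E : rel 'I_n) (S : {set 'I_n}) k :
  Sk E S k = Sk E S k.+1 -> forall m, (k <= m)%N -> Sk E S m = Sk E S k.
Proof.
move=> Hk; elim=> [|m IH]; first by rewrite leqn0 => /eqP ->.
rewrite leq_eqVlt => /orP [/eqP -> //|]; rewrite ltnS => /IH Hm.
by rewrite [Sk E S m.+1]/= Hm; exact: esym Hk.
Qed.

Lemma exists_stable n (E : rel 'I_n) (S : {set 'I_n}) : exists k, Sk E S k = Sk E S k.+1.
Proof.
case: (boolP [exists k : 'I_n.+1, Sk E S k == Sk E S k.+1]).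
  by case/existsP => k /eqP; exists k.
rewrite negb_exists => /forallP H.
have Hc : forall k, (k <= n.+1)%N -> (k <= #|Sk E S k|)%N.
  elim=> [|k IH] // lk.
  have := H (Ordinal lk) => /= ne.
  apply: leq_ltn_trans (IH (ltnW lk)) _.
  by apply: proper_card; rewrite properEneq ne Sk_sub.
have := Hc n.+1 (leqnn _); have := max_card (mem (Sk E S n.+1)).
by rewrite card_ord => a b; move: (leq_trans b a); rewrite ltnn.
Qed.

Lemma all_Sk (C : numClosedFieldType) n (E : rel 'I_n) (w : 'I_n -> 'I_n -> C)
    (S : {set 'I_n}) lam :
  structural E w S lam -> exists N, forall v, v \in Sk E S N.
Proof.
case=> _ Hcyc _.
case: (exists_stable E S) => N HN; exists N => v.
apply/negPn/negP => vN.
pose A := fun y => y \notin Sk E S N.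
pose f := fun y => odflt y [pick z | (z != y) && E y z && (z \notin Sk E S N)].
have Hf : forall y, A y -> [&& f y != y, E y (f y) & A (f y)].
  move=> y Ay; rewrite /f; case: pickP => [z /andP [/andP [h1 h2] h3]|none]; first by rewrite /= h1 h2.
  exfalso; move: Ay; rewrite /A HN /= in_setU negb_or => /andP [_]; rewrite inE.
  move/negP; apply; apply/forallP => j; apply/implyP => /andP [a b].
  by move: (none j); rewrite a b /= => /negbFE.
have H1 : forall y, A y -> A (f y) by move=> y /Hf /and3P [].
have H2 : forall y, A y -> f y != y by move=> y /Hf /and3P [].
have H3 : forall y, A y -> E y (f y) by move=> y /Hf /and3P [].
have [c [s [cyc ncyc allA]]] := cycle_of_fun H1 H2 H3 vN.
have := Hcyc c s cyc ncyc; case/hasP => y ys yS.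
move/allP: allA => /(_ y ys); rewrite /A.
by move/subsetP: (S_Sk E S N) => /(_ y yS) ->.
Qed.



Definition Good n (E : rel 'I_n) (S : {set 'I_n}) (x : 'I_n) (t : seq 'I_n) : bool :=
 [&& (0 < size t)%N, path E x t, uniq (x :: t),
     all (fun v => v \notin S) (belast x t) & last x t \in S].

Lemma good_size n (E : rel 'I_n) (S : {set 'I_n}) x t : Good E S x t -> (size t < n)%N.
Proof. by case/and5P => _ _ /size_uniq_ord. Qed.

Lemma goodC_self n (E : rel 'I_n) (S : {set 'I_n}) x t : Good E S x (x :: t) = false.
Proof. by rewrite /Good /= in_cons eqxx /= !andbF. Qed.

Lemma goodC_S n (E : rel 'I_n) (S : {set 'I_n}) x j t :
  x \notin S -> j \in S -> j != x -> Good E S x (j :: t) = E x j && (t == [::]).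
Proof.
move=> xS jS jx; case: t => [|b t].
  by rewrite /Good /= mem_seq1 eq_sym jx xS jS !andbT.
by rewrite /Good /= jS !andbF.
Qed.

Lemma all_in_Sk n (E : rel 'I_n) (S : {set 'I_n}) k t a :
  a \in Sk E S k -> path E a t -> uniq (a :: t) ->
  all (fun v => v \notin S) (belast a t) -> all (fun v => v \in Sk E S k) t.
Proof.
elim: t a => [|b t IH] a //= aK /andP [Eab pt] /andP [abt ubt] /andP [aS bl].
have bK : b \in Sk E S k.
  apply: (sk_closed aK aS Eab); apply/negP => /eqP ba; move: abt.
  by rewrite ba in_cons eqxx.
by rewrite bK (IH b bK pt ubt bl).
Qed.

Definition Gr n (E : rel 'I_n) (S : {set 'I_n}) (j : 'I_n) (t : seq 'I_n) : bool :=
 [&& path E j t, uniq (j :: t), all (fun v => v \notin S) (belast j t) & last j t \in S].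

Lemma Good_Gr n (E : rel 'I_n) (S : {set 'I_n}) j t :
  Good E S j t = (0 < size t)%N && Gr E S j t.
Proof. by []. Qed.

Lemma Good_cons n (E : rel 'I_n) (S : {set 'I_n}) x j t :
  Good E S x (j :: t) = [&& E x j, x \notin j :: t, x \notin S & Gr E S j t].
Proof.
rewrite /Good /Gr [path _ _ (_ :: _)]/= (cons_uniq x) [belast _ _]/= [last _ _]/= [all _ (_ :: _)]/= [size _]/=.
case: (E x j); case: (x \in j :: t); case: (x \in S); case: (path E j t);
  case: (uniq (j :: t)); case: (all _ _); by case: (last j t \in S).
Qed.

Lemma goodC_nS n (E : rel 'I_n) (S : {set 'I_n}) k x j t :
  x \in Sk E S k.+1 -> x \notin Sk E S k -> j \notin S -> j != x ->
  Good E S x (j :: t) = E x j && Good E S j t.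
Proof.
move=> xK1 xK jS jx.
have xS : x \notin S by apply: contra xK; apply/subsetP/S_Sk.
rewrite Good_cons xS /=.
case Exj : (E x j) => //=.
case: t => [|b t]; first by rewrite /Gr /Good /= (negbTE jS) !andbF.
case Hg: (Good E S j (b :: t)); last first.
  by apply/negP => /andP [_ g]; move: Hg; rewrite Good_Gr g.
move: (Hg); rewrite Good_Gr /= => -> ; rewrite andbT.
have jK := SkS_step xK1 xK Exj jx.
case/and5P: Hg => _ pt ut bt _.
have /allP Hall := all_in_Sk jK pt ut bt.
rewrite in_cons negb_or eq_sym jx /=; apply/negP => /Hall.
by rewrite (negbTE xK).
Qed.

Lemma is_branch_cons n (E : rel 'I_n) (S : {set 'I_n}) i j t :
  is_branch E S i (j :: t) =
  [&& E i j, path E j t, uniq (i :: j :: t) || ((last j t == i) && uniq (j :: t))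
    & all (fun v => v \notin S) (belast j t)].
Proof.
rewrite /is_branch /is_gpath [path _ _ (_ :: _)]/= [last _ _]/=.
rewrite -[(size (j :: t)).-1]/(size t) take_belast [(1 <= _)%N]/=.
case: (E i j); case: (path E j t); case: (uniq _ || _); by case: (all _ _).
Qed.

Lemma brC_S n (E : rel 'I_n) (S : {set 'I_n}) i j t :
  i \in S -> j \in S ->
  (is_branch E S i (j :: t) && (last i (j :: t) \in S)) = E i j && (t == [::]).
Proof.
move=> iS jS; rewrite is_branch_cons; case: t => [|b t].
  rewrite /= jS !andbT mem_seq1; case: (E i j) => //=.
  by rewrite eq_sym; case: (j == i).
by rewrite [belast _ _]/= [all _ (_ :: _)]/= jS /= !andbF.
Qed.

Lemma brC_nS n (E : rel 'I_n) (S : {set 'I_n}) i j t :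
  i \in S -> j \notin S ->
  (is_branch E S i (j :: t) && (last i (j :: t) \in S)) = E i j && Good E S j t.
Proof.
move=> iS jS; rewrite is_branch_cons [last _ _]/=.
apply/idP/idP.
  case/andP => /and4P [Eij pt hu bt] lt.
  rewrite Eij /Good pt bt lt !andbT /=.
  apply/andP; split.
    by case: t {pt hu bt} lt => //=; rewrite (negbTE jS).
  by case/orP: hu => /andP [_ u]; move: u => /= /andP [a b]; apply/andP.
case/andP => Eij /and5P [st pt ut bt lt].
rewrite Eij pt bt [last i _]/= lt !andbT.
case: (eqVneq (last j t) i) => [_ | li]; first by rewrite ut orbT.
apply/orP; left; rewrite cons_uniq ut andbT.
rewrite lastI mem_rcons in_cons eq_sym (negbTE li) /=.
by apply/negP => /(allP bt); rewrite iS.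
Qed.

Lemma sum_Sk_neq (C : numClosedFieldType) n (E : rel 'I_n) (w : 'I_n -> 'I_n -> C)
   (S : {set 'I_n}) k x (F : 'I_n -> C) :
  (forall i j, ~~ E i j -> w i j = 0) ->
  (forall j, w x j = 0 -> F j = 0) ->
  x \in Sk E S k.+1 -> x \notin Sk E S k ->
  \sum_(j in Sk E S k) F j = \sum_(j | j != x) F j.
Proof.
move=> hw hF xK1 xK; rewrite [LHS]big_mkcond [RHS]big_mkcond; apply: eq_bigr => j _.
case jK: (j \in Sk E S k).
  by have -> : j != x by apply/negP => /eqP ejx; move: xK; rewrite -ejx jK.
case: (eqVneq j x) => [//| jx].
case Exj : (E x j); first by move: jK; rewrite (SkS_step xK1 xK Exj jx).
by rewrite hF // hw // Exj.
Qed.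

Lemma depth_of n (E : rel 'I_n) (S : {set 'I_n}) N v :
  v \in Sk E S N -> v \notin S -> exists k, v \in Sk E S k.+1 /\ v \notin Sk E S k.
Proof.
elim: N => [|N IH] /=; first by move=> ->.
case vN: (v \in Sk E S N); first by move=> _ /(IH vN).
by move=> H _; exists N; rewrite vN.
Qed.

Fixpoint gval (C : numClosedFieldType) n (E : rel 'I_n) (w : 'I_n -> 'I_n -> C)
   (S : {set 'I_n}) (lam : C) (uS : 'cV[C]_#|S|) (k : nat) : 'I_n -> C :=
  match k with
  | 0 => fun i => \sum_(a | enum_val a == i) uS a 0
  | k'.+1 => fun l => if l \in Sk E S k' then gval E w lam uS k' l
             else \sum_(j in Sk E S k') w l j / (lam - w l l) * gval E w lam uS k' j
  end.

Lemma gval_stable (C : numClosedFieldType) n (E : rel 'I_n) (w : 'I_n -> 'I_n -> C)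
   (S : {set 'I_n}) (lam : C) (uS : 'cV[C]_#|S|) k m l :
  l \in Sk E S k -> (k <= m)%N -> gval E w lam uS m l = gval E w lam uS k l.
Proof.
move=> lK; elim: m => [|m IH]; first by rewrite leqn0 => /eqP ->.
rewrite leq_eqVlt => /orP [/eqP -> //|]; rewrite ltnS => km.
by rewrite /= (subsetP (Sk_mono E S km) _ lK) IH.
Qed.

Lemma gval0 (C : numClosedFieldType) n (E : rel 'I_n) (w : 'I_n -> 'I_n -> C)
   (S : {set 'I_n}) (lam : C) (uS : 'cV[C]_#|S|) a :
  gval E w lam uS 0 (enum_val a) = uS a 0.
Proof.
rewrite /= (big_pred1 a) // => b; rewrite /= (inj_eq enum_val_inj) //.
Qed.

Lemma dropN (C : numClosedFieldType) n (E : rel 'I_n) (S : {set 'I_n}) j (F : seq 'I_n -> C) :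
  \sum_(k < n.+1) tsum k (Good E S j) F = \sum_(k < n) tsum k (Good E S j) F.
Proof.
rewrite big_ord_recr /= tsum_pred0 ?addr0 // => t st.
by apply/negP => /good_size; rewrite st ltnn.
Qed.

Lemma claimA (C : numClosedFieldType) n (E : rel 'I_n) (w : 'I_n -> 'I_n -> C)
   (S : {set 'I_n}) (lam : C) (g : 'I_n -> C) :
  (forall i j, ~~ E i j -> w i j = 0) ->
  (forall k l, l \in Sk E S k.+1 :\: Sk E S k ->
     g l = \sum_(j in Sk E S k) w l j / (lam - w l l) * g j) ->
  forall k x, x \in Sk E S k -> x \notin S ->
  g x = \sum_(m < n.+1) tsum m (Good E S x) (fun t => tail_weight w lam x t * g (last x t)).
Proof.
move=> hw hrec; elim=> [|k IH] x; first by move=> /= ->.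
case xK: (x \in Sk E S k); first by move=> _; apply: IH.
move=> xK1 xS.
have xKK : x \notin Sk E S k by rewrite xK.
rewrite (hrec k x); last by rewrite inE xK1 xKK.
rewrite (sum_Sk_neq hw _ xK1 xKK); last by move=> j ->; rewrite !mul0r.
have n0 : (0 < n)%N by apply: leq_ltn_trans (ltn_ord x).
rewrite big_ord_recl.
rewrite [X in _ = _ + X](eq_bigr (fun i : 'I_n => \sum_(j : 'I_n) tsum i (fun t => Good E S x (j :: t))
   (fun t => tail_weight w lam x (j :: t) * g (last x (j :: t))))); last first.
  by move=> i _; rewrite lift0 tsum_cons.
rewrite tsum0 [Good _ _ _ _]/Good /= add0r.
rewrite exchange_big [LHS]big_mkcond; apply: eq_bigr => j _.
case: (eqVneq j x) => [-> | jx] /=.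
  by rewrite big1 // => i _; apply: tsum_pred0 => t _; rewrite goodC_self.
case: (boolP (j \in S)) => jS.
  rewrite (eq_bigr (fun i : 'I_n => tsum i (fun t => E x j && (t == [::]))
     (fun t => tail_weight w lam x (j :: t) * g (last x (j :: t))))); last first.
    by move=> i _; apply: tsum_eq => t _; rewrite goodC_S.
  rewrite tsum_nil //=; case Exj: (E x j); first by rewrite mulr1.
  by rewrite hw ?Exj // !mul0r.
have jK : E x j -> j \in Sk E S k by move=> Exj; apply: SkS_step xK1 xKK Exj jx.
rewrite (eq_bigr (fun i : 'I_n => if E x j then w x j / (lam - w x x) *
     tsum i (Good E S j) (fun t => tail_weight w lam j t * g (last j t)) else 0));
  last first.
  move=> i _; rewrite -tsum_scale -tsum_condl; apply: tsum_eq => t _.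
    by rewrite (goodC_nS _ xK1 xKK).
  by move=> _; rewrite /= mulrA.
case Exj: (E x j); last by rewrite big1 // hw ?Exj // !mul0r.
by rewrite -mulr_sumr -dropN -(IH j (jK Exj) jS).
Qed.

Lemma claimB (C : numClosedFieldType) n (E : rel 'I_n) (w : 'I_n -> 'I_n -> C)
   (S : {set 'I_n}) (lam : C) (g : 'I_n -> C) N :
  (forall i j, ~~ E i j -> w i j = 0) ->
  (forall k l, l \in Sk E S k.+1 :\: Sk E S k ->
     g l = \sum_(j in Sk E S k) w l j / (lam - w l l) * g j) ->
  (forall v, v \in Sk E S N) ->
  forall i, i \in S ->
  \sum_(s in S) Rij E w S lam i s * g s = \sum_j w i j * g j.
Proof.
move=> hw hrec allN i iS.
have n0 : (0 < n)%N by apply: leq_ltn_trans (ltn_ord i).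
have -> : \sum_(s in S) Rij E w S lam i s * g s =
   \sum_(k < n.+1) tsum k (fun t => is_branch E S i t && (last i t \in S))
       (fun t => branch_weight w lam i t * g (last i t)).
  rewrite /Rij; under eq_bigr do rewrite mulr_suml.
  rewrite exchange_big; apply: eq_bigr => k _.
  rewrite /tsum; under eq_bigr do rewrite mulr_suml.
  under eq_bigr do rewrite big_mkcond.
  rewrite exchange_big [RHS]big_mkcond; apply: eq_bigr => t _.
  case bt: (is_branch E S i t) => /=; last by rewrite big1.
  case lS: (last i t \in S).
    rewrite (bigD1 (last i t)) //= eqxx big1 ?addr0 // => s /andP [_ ns].
    by rewrite eq_sym (negbTE ns).
  by rewrite big1 // => s sS; case: eqP => // ls; move: lS; rewrite ls sS.
rewrite big_ord_recl.
rewrite [X in _ + X = _](eq_bigr (fun i0 : 'I_n => \sum_(j : 'I_n)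
   tsum i0 (fun t => is_branch E S i (j :: t) && (last i (j :: t) \in S))
   (fun t => branch_weight w lam i (j :: t) * g (last i (j :: t))))); last first.
  by move=> i0 _; rewrite lift0 tsum_cons.
rewrite tsum0 [is_branch _ _ _ _]/is_branch /= add0r.
rewrite exchange_big; apply: eq_bigr => j _.
case: (boolP (j \in S)) => jS.
  rewrite (eq_bigr (fun i0 : 'I_n => tsum i0 (fun t => E i j && (t == [::]))
     (fun t => branch_weight w lam i (j :: t) * g (last i (j :: t))))); last first.
    by move=> i0 _; apply: tsum_eq => t _; rewrite brC_S.
  rewrite tsum_nil //=; case Eij: (E i j); first by rewrite mulr1.
  by rewrite hw ?Eij // !mul0r.
rewrite (eq_bigr (fun i0 : 'I_n => if E i j then w i j *
     tsum i0 (Good E S j) (fun t => tail_weight w lam j t * g (last j t)) else 0));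
  last first.
  move=> i0 _; rewrite -tsum_scale -tsum_condl; apply: tsum_eq => t _.
    by rewrite brC_nS.
  by move=> _; rewrite /= mulrA.
case Eij: (E i j); last by rewrite big1 // hw ?Eij // !mul0r.
rewrite -mulr_sumr -dropN -(claimA hw hrec (allN j) jS) //.
Qed.

Unset Implicit Arguments. Set Strict Implicit.

Theorem mainTheorem2 (C : numClosedFieldType) (n : nat)
    (E : rel 'I_n) (w : 'I_n -> 'I_n -> C)
    (hw : forall i j, ~~ E i j -> w i j = 0)
    (lam0 : C) (hlam0 : eigenvalue (adjmx w) lam0)
    (S : {set 'I_n}) (hS : structural E w S lam0)
    (uS : 'cV[C]_#|S|) (huS0 : uS != 0)
    (huS : redmx E w S lam0 *m uS = lam0 *: uS) :
  let rec_rel (u : 'cV[C]_n) :=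
    (forall a : 'I_#|S|, u (enum_val a) 0 = uS a 0) /\
    (forall (k : nat) (l : 'I_n), l \in Sk E S k.+1 :\: Sk E S k ->
       u l 0 = \sum_(j in Sk E S k) w l j / (lam0 - w l l) * u j 0) in
  (exists! u : 'cV[C]_n, rec_rel u) /\
  (forall u : 'cV[C]_n, rec_rel u ->
     [/\ u != 0, adjmx w *m u = lam0 *: u &
         forall a : 'I_#|S|, u (enum_val a) 0 = uS a 0]).
Proof.
move=> rec_rel.
have [N allN] := all_Sk hS.
case: hS => _ _ hlam.
have uniq_rec : forall u1 u2, rec_rel u1 -> rec_rel u2 -> u1 = u2.
  move=> u1 u2 [a1 b1] [a2 b2].
  have H : forall k l, l \in Sk E S k -> u1 l 0 = u2 l 0.
    elim=> [|k IH] l /=.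
      by move=> lS; rewrite -(enum_rankK_in lS lS) a1 a2.
    case lK: (l \in Sk E S k); first by move=> _; apply: IH.
    move=> lK1; have Hl : l \in Sk E S k.+1 :\: Sk E S k by rewrite inE lK lK1.
    rewrite (b1 _ _ Hl) (b2 _ _ Hl); apply: eq_bigr => j jK; by rewrite IH.
  by apply/matrixP => i j; rewrite (ord1 j); apply: (H N).
split.
  have rc : rec_rel (\col_i gval E w lam0 uS N i).
    split.
      move=> a; rewrite mxE (@gval_stable _ _ E w S lam0 uS 0 N _ (enum_valP a) (leq0n N)).
      exact: gval0.
    move=> k l; rewrite inE => /andP [lK lK1].
    have kN : (k < N)%N.
      rewrite ltnNge; apply/negP => Nk.
      by move: lK; rewrite (subsetP (Sk_mono E S Nk) _ (allN l)).
    rewrite mxE (gval_stable w lam0 uS lK1 kN) /= (negbTE lK); apply: eq_bigr => j jK.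
    by rewrite mxE (gval_stable w lam0 uS jK (ltnW kN)).
  exists (\col_i gval E w lam0 uS N i); split=> // u' ru'.
  exact: uniq_rec rc ru'.
move=> u [h1 h2]; split=> //.
  apply/negP => /eqP u0; move/negP: huS0; apply; apply/eqP/matrixP => a b.
  by rewrite (ord1 b) -h1 u0 !mxE.
apply/matrixP => i j0; rewrite (ord1 j0) !mxE.
under eq_bigr do rewrite mxE.
case: (boolP (i \in S)) => iS.
  rewrite -(claimB (g := fun j => u j 0) hw h2 allN iS).
  rewrite big_enum_val /=.
  have := congr1 (fun M : 'M[C]_(#|S|, 1) => M (enum_rank_in iS i) 0) huS; rewrite !mxE.
  rewrite -h1 (enum_rankK_in iS iS) => <-.
  by apply: eq_bigr => b _; rewrite !mxE (enum_rankK_in iS iS) h1.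
have [k [iK1 iK]] := depth_of (allN i) iS.
have d0 : lam0 - w i i != 0 by rewrite subr_eq0 eq_sym hlam.
have Hu : u i 0 = \sum_(j | j != i) w i j / (lam0 - w i i) * u j 0.
  rewrite (h2 k i); last by rewrite inE iK iK1.
  by rewrite (sum_Sk_neq hw _ iK1 iK) // => j ->; rewrite !mul0r.
rewrite (bigD1 i) //= (eq_bigr (fun j => (lam0 - w i i) * (w i j / (lam0 - w i i) * u j 0)));
  last by move=> j _; rewrite mulrA [_ * (_ / _)]mulrC divfK.
by rewrite -mulr_sumr -Hu mulrBl addrC subrK.
Qed.
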